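(* Let $I\subset S=K[x_1,\dots,x_t]$ be an $\mathfrak m$-primary monomial ideal. Then there exists $s_0$ such that $v(I^{s+1})\ge v(I)$ for all $s\ge s_0$.
   Context: $K$ is a field, $S$ is standard graded and $\mathfrak m=\langle x_1,\dots,x_t\rangle$. For a proper graded ideal $I$, the $v$-number is $v(I)=\min\{k\ge 0 : \exists f\in S_k,\ \mathcal P\in\operatorname{Ass}(S/I) \text{ with } (I:f)=\mathcal P\}$. *)

(* Defs.v *)
From HB Require Import structures.
From mathcomp Require Import all_boot all_algebra.
From mathcomp Require Import mpoly.
From Stdlib Require Import ClassicalEpsilon.
Set Implicit Arguments. Unset Strict Implicit. Unset Printing Implicit Defensive.
Import GRing.Theory.
Local Open Scope ring_scope.

Section Ideals.
Variables (K : fieldType) (t : nat).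
Local Notation S := {mpoly K[t]}.

Definition ideal_of := S -> Prop.

Definition is_ideal (J : ideal_of) : Prop :=
  [/\ J 0, (forall f g, J f -> J g -> J (f + g)) & (forall r f, J f -> J (r * f))].

Definition gen_ideal (G : ideal_of) : ideal_of :=
  fun f => forall J, is_ideal J -> (forall g, G g -> J g) -> J f.

Definition max_ideal : ideal_of := gen_ideal (fun f => exists i : 'I_t, f = 'X_i).

Definition is_monomial (f : S) : Prop := exists m : 'X_{1..t}, f = 'X_[m].

Definition monomial_ideal (I : ideal_of) : Prop :=
  exists G : ideal_of, (forall g, G g -> is_monomial g) /\
                       (forall f, I f <-> gen_ideal G f).

Definition radical (I : ideal_of) : ideal_of := fun f => exists n : nat, I (f ^+ n).

Definition m_primary (I : ideal_of) : Prop :=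
  is_ideal I /\ forall f, radical I f <-> max_ideal f.

Definition prod_ideal (I J : ideal_of) : ideal_of :=
  gen_ideal (fun h => exists f g, [/\ I f, J g & h = f * g]).

Fixpoint pow_ideal (I : ideal_of) (s : nat) : ideal_of :=
  match s with
  | 0 => fun _ => True
  | s'.+1 => prod_ideal (pow_ideal I s') I
  end.

Definition colon (I : ideal_of) (f : S) : ideal_of := fun g => I (g * f).

Definition is_prime_ideal (P : ideal_of) : Prop :=
  [/\ is_ideal P, ~ P 1 & forall f g, P (f * g) -> P f \/ P g].

Definition associated_prime (I P : ideal_of) : Prop :=
  is_prime_ideal P /\ exists f : S, forall g, colon I f g <-> P g.

Definition vnum_set (I : ideal_of) (k : nat) : Prop :=
  exists (f : S) (P : ideal_of),
    [/\ f \is k.-homog, associated_prime I P & forall g, colon I f g <-> P g].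

Definition vnum_pred (I : ideal_of) : pred nat :=
  fun k => if excluded_middle_informative (vnum_set I k) then true else false.

(* v(I) = min { k : ... }  (defaults to 0 if the set is empty, which does
   not happen for proper graded ideals) *)
Definition vnumber (I : ideal_of) : nat :=
  match excluded_middle_informative (exists k, vnum_pred I k) with
  | left H => ex_minn H
  | right _ => 0%N
  end.

End Ideals.

(* Main.v *)
Require Import Defs.
From HB Require Import structures.
From mathcomp Require Import all_boot all_algebra.
From mathcomp Require Import mpoly.
From Stdlib Require Import Classical ClassicalEpsilon.
From mathcomp Require Import zify.
Set Implicit Arguments. Unset Strict Implicit. Unset Printing Implicit Defensive.
Import GRing.Theory.
Local Open Scope ring_scope.

Section Aux.
Variables (K : fieldType) (t : nat).
Local Notation S := {mpoly K[t]}.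
Implicit Types (J : ideal_of K t) (G : ideal_of K t).

Lemma gen_ideal_is_ideal G : is_ideal (gen_ideal G).
Proof.
split.
- by move=> J [J0 _ _] _.
- move=> f g Hf Hg J HJ HG; case: (HJ) => _ HD _; exact: HD (Hf J HJ HG) (Hg J HJ HG).
- move=> r f Hf J HJ HG; case: (HJ) => _ _ HM; exact: HM (Hf J HJ HG).
Qed.

Lemma gen_ideal_sub G g : G g -> gen_ideal G g.
Proof. by move=> Gg J _ HG; apply: HG. Qed.

Lemma gen_ideal_min G J : is_ideal J -> (forall g, G g -> J g) ->
  forall f, gen_ideal G f -> J f.
Proof. by move=> HJ HG f Hf; apply: Hf. Qed.

Lemma idMr J f r : is_ideal J -> J f -> J (f * r).
Proof. by case=> _ _ HM Hf; rewrite mulrC; apply: HM. Qed.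

Lemma idMl J f r : is_ideal J -> J f -> J (r * f).
Proof. by case=> _ _ HM Hf; apply: HM. Qed.

Lemma idD J f g : is_ideal J -> J f -> J g -> J (f + g).
Proof. by case=> _ HD _; apply: HD. Qed.

Lemma idB J f g : is_ideal J -> J f -> J g -> J (f - g).
Proof.
move=> HJ Hf Hg; apply: idD => //; rewrite -mulN1r; exact: idMl.
Qed.

Lemma idZ J c f : is_ideal J -> J f -> J (c *: f).
Proof. by move=> HJ Hf; rewrite -mul_mpolyC; apply: idMl. Qed.

Lemma colon_ideal J f : is_ideal J -> is_ideal (colon J f).
Proof.
move=> HJ; split; rewrite /colon.
- by rewrite mul0r; case: HJ.
- by move=> g h Hg Hh; rewrite mulrDl; apply: idD.
- by move=> r g Hg; rewrite -mulrA; apply: idMl.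
Qed.

Definition Z0 : ideal_of K t := fun f => f@_0 = 0.

Lemma mcoeff0M (f g : S) : (f * g)@_0 = f@_0 * g@_0.
Proof. exact: (rmorphM (mcoeff 0%MM : S -> K)). Qed.

Lemma Z0_ideal : is_ideal Z0.
Proof.
split; rewrite /Z0.
- exact: mcoeff0.
- by move=> f g Hf Hg; rewrite mcoeffD Hf Hg addr0.
- by move=> r f Hf; rewrite mcoeff0M Hf mulr0.
Qed.

Lemma max_ideal_Z0 f : max_ideal f <-> Z0 f.
Proof.
split.
- apply: gen_ideal_min; first exact: Z0_ideal.
  move=> g [i ->]; rewrite /Z0 mcoeffX.
  by rewrite mnm1_eq0.
- move=> Hf; rewrite (mpolyE f) big_seq; apply: (big_ind (fun p => @max_ideal K t p)).
  + by case: (gen_ideal_is_ideal (fun f => exists i : 'I_t, f = 'X_i)).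
  + by move=> x y; apply: idD; apply: gen_ideal_is_ideal.
  + move=> m Hm; apply: (idZ (J := @max_ideal K t)); first exact: gen_ideal_is_ideal.
    have m0 : m != 0%MM.
      by apply: contraTneq Hm => ->; rewrite mcoeff_msupp negbK; apply/eqP.
    have [i Hi] : exists i, m i != 0%N.
      apply/existsP; apply: contraR m0 => /existsPn H.
      by apply/eqP/mnmP => i; rewrite mnm0E; apply/eqP; move: (H i); rewrite negbK.
    rewrite -(submK (m := U_(i)%MM) (m' := m)); last by rewrite lep1mP.
    rewrite mpolyXD; apply: (idMl (J := @max_ideal K t)); first exact: gen_ideal_is_ideal.
    by apply: gen_ideal_sub; exists i.
Qed.

Lemma max_prime : is_prime_ideal (@max_ideal K t).
Proof.
split; first exact: gen_ideal_is_ideal.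
- by move/max_ideal_Z0; rewrite /Z0 mcoeff1 eqxx => /eqP; rewrite oner_eq0.
- move=> f g /max_ideal_Z0; rewrite /Z0 mcoeff0M => /eqP; rewrite mulf_eq0.
  by case/orP => /eqP H; [left|right]; apply/max_ideal_Z0.
Qed.

End Aux.
Section Aux2.
Variables (K : fieldType) (t : nat).
Local Notation S := {mpoly K[t]}.
Implicit Types (J : ideal_of K t) (G : ideal_of K t) (I : ideal_of K t).

Definition Dn (n : nat) : ideal_of K t :=
  fun f => forall m, m \in msupp f -> (n <= mdeg m)%N.

Lemma Dn_ideal n : is_ideal (Dn n).
Proof.
split; rewrite /Dn.
- by move=> m; rewrite msupp0.
- by move=> f g Hf Hg m /msuppD_le; rewrite mem_cat => /orP [/Hf|/Hg].
- move=> r f Hf m /msuppM_le /allpairsP [[m1 m2] /= [_ H2 ->]].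
  by rewrite mdegD; apply: leq_trans (Hf _ H2) (leq_addl _ _).
Qed.

Lemma DnM a b (f g : S) : Dn a f -> Dn b g -> Dn (a + b) (f * g).
Proof.
move=> Hf Hg m /msuppM_le /allpairsP [[m1 m2] /= [H1 H2 ->]].
by rewrite mdegD leq_add // ?Hf ?Hg.
Qed.

Lemma Z0_D1 f : Z0 f -> Dn 1 f.
Proof.
move=> Hf m Hm; rewrite lt0n; apply: contraTneq Hm => /eqP.
by rewrite mdeg_eq0 => /eqP ->; rewrite mcoeff_msupp Hf eqxx.
Qed.

Lemma not_Dn1 n : ~ Dn n.+1 (1 : S).
Proof. by move/(_ 0%MM); rewrite msupp1 mem_seq1 eqxx mdeg0 => /(_ isT). Qed.

Lemma pow_ideal_is_ideal I n : is_ideal I -> is_ideal (pow_ideal I n).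
Proof.
move=> HI; case: n => [|n] /=; last exact: gen_ideal_is_ideal.
by split.
Qed.

Lemma pow_sub_D I : (forall f, I f -> Dn 1 f) ->
  forall n f, pow_ideal I n f -> Dn n f.
Proof.
move=> HI; elim=> [|n IH] f /=; first by move=> _ m _.
apply: gen_ideal_min; first exact: Dn_ideal.
move=> g [a [b [Ha Hb ->]]]; rewrite -addn1; apply: DnM; [exact: IH | exact: HI].
Qed.

Lemma pow_X I (N : 'I_t -> nat) : (forall i, I ('X_i ^+ N i)) ->
  forall n i, pow_ideal I n ('X_i ^+ (N i * n)).
Proof.
move=> HN; elim=> [|n IH] i /=; first by [].
apply: gen_ideal_sub; exists ('X_i ^+ (N i * n)), ('X_i ^+ N i); split => //.
by rewrite mulnSr exprD.
Qed.

Lemma bound_notin J (N : 'I_t -> nat) m : is_ideal J ->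
  (forall i, J ('X_i ^+ N i)) -> ~ J 'X_[m] -> (mdeg m <= \sum_i N i)%N.
Proof.
move=> HJ HN Hm; case: (boolP [forall i, (m i < N i)%N]) => [/forallP H|].
  by rewrite mdegE; apply: leq_sum => i _; apply: ltnW.
move=> /forallPn [i]; rewrite -leqNgt => Hi; exfalso; apply: Hm.
have le : (U_(i) *+ N i <= m)%MM.
  apply/mnm_lepP => j; rewrite mulmnE mnm1E.
  by case: eqP => [<-|_]; rewrite ?mul1n ?mul0n.
rewrite -(submK le) mpolyXD -mpolyXn; exact: idMl.
Qed.

Lemma socle J (N : 'I_t -> nat) : is_ideal J -> ~ J 1 ->
  (forall i, J ('X_i ^+ N i)) ->
  exists m, ~ J 'X_[m] /\ forall i, J ('X_i * 'X_[m]).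
Proof.
move=> HJ HJ1 HN; set B := (\sum_i N i)%N.
suff H : forall d m, ~ J 'X_[m] -> (B - mdeg m <= d)%N ->
   exists m, ~ J 'X_[m] /\ forall i, J ('X_i * 'X_[m]).
  by apply: (H B 0%MM); rewrite ?mpolyX0 // leq_subr.
elim=> [|d IH] m Hm Hd;
  (case: (classic (forall i, J ('X_i * 'X_[m]))) => [Hall|]; first by exists m);
  move=> /not_all_ex_not [i Hi];
  have Hb := bound_notin HJ HN (m := (U_(i) + m)%MM);
  rewrite mpolyXD in Hb; have := Hb Hi; rewrite mdegD mdeg1 => Hb'.
- by move: Hd Hb'; rewrite -/B; lia.
- apply: (IH (U_(i) + m)%MM); first by rewrite mpolyXD.
  by rewrite mdegD mdeg1; move: Hd Hb'; rewrite -/B; lia.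
Qed.
End Aux2.
Section Aux3.
Variables (K : fieldType) (t : nat).
Local Notation S := {mpoly K[t]}.
Implicit Types (J : ideal_of K t) (G : ideal_of K t) (I : ideal_of K t).

Lemma socle_colon J m : is_ideal J -> ~ J 'X_[m] ->
  (forall i, J ('X_i * 'X_[m])) ->
  forall g, colon J 'X_[m] g <-> max_ideal g.
Proof.
move=> HJ Hm Hi.
have Hmax : forall g, max_ideal g -> colon J 'X_[m] g.
  apply: gen_ideal_min; first exact: colon_ideal.
  by move=> g [i ->]; apply: Hi.
move=> g; split; last exact: Hmax.
move=> Hg; apply/max_ideal_Z0; rewrite /Z0.
apply/eqP; apply/negP => /negP Hc; apply: Hm.
set c := g@_0.
have Hh : max_ideal (g - c%:MP).
  by apply/max_ideal_Z0; rewrite /Z0 mcoeffB mcoeffC eqxx mulr1 subrr.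
have H1 : J (c%:MP * 'X_[m]).
  have -> : c%:MP * 'X_[m] = g * 'X_[m] - (g - c%:MP) * 'X_[m].
    by rewrite mulrBl opprB addrC addrNK.
  by apply: idB => //; apply: Hmax.
have -> : 'X_[m] = c^-1 *: (c%:MP * 'X_[m]) :> S.
  by rewrite mul_mpolyC scalerA mulVf // scale1r.
exact: idZ.
Qed.

Lemma socle_vnum J m : is_ideal J -> ~ J 'X_[m] ->
  (forall i, J ('X_i * 'X_[m])) -> vnum_set J (mdeg m).
Proof.
move=> HJ Hm Hi; have Hc := socle_colon HJ Hm Hi.
exists 'X_[m], (@max_ideal K t); split => //.
- by rewrite dhomogX.
- by split; [exact: max_prime | exists 'X_[m]].
Qed.

Lemma prime_pow (P : ideal_of K t) (x : S) k : is_prime_ideal P -> P (x ^+ k) -> P x.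
Proof.
case=> _ HP1 HPp; elim: k => [|k IH]; first by rewrite expr0.
by rewrite exprS => /HPp [//|/IH].
Qed.

Lemma vnum_lb J (N : 'I_t -> nat) n k (i0 : 'I_t) : is_ideal J ->
  (forall f, J f -> Dn n f) -> (forall i, J ('X_i ^+ N i)) ->
  vnum_set J k -> (n <= k.+1)%N.
Proof.
move=> HJ HD HN [f [P [Hf [HP _] Hc]]].
have JP : forall g, J g -> P g.
  by move=> g Hg; apply/Hc; rewrite /colon; exact: (idMr f HJ Hg).
have PX : P 'X_i0 by apply: (prime_pow (k := N i0)) => //; apply: JP.
have JX : J ('X_i0 * f) by apply/Hc.
case: HP => _ HP1 _.
have f0 : f != 0.
  by apply/eqP => f0; apply: HP1; apply/Hc; rewrite /colon f0 mulr0; case: HJ.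
have X0 : ('X_i0 : S) != 0.
  by apply/eqP => /(congr1 (mcoeff U_(i0))); rewrite mcoeffX eqxx mcoeff0 => /eqP; rewrite oner_eq0.
have nz : ('X_i0 * f) != 0 by rewrite mulf_neq0.
have Hh : ('X_i0 * f) \is (1 + k).-homog.
  by apply: dhomogM => //; rewrite dhomogX; apply/eqP; exact: mdeg1.
have Hm := mlead_supp nz.
have := HD _ JX _ Hm; rewrite (dhomog_mf Hh Hm) add1n //.
Qed.

Lemma vnumber_le J k : vnum_set J k -> (vnumber J <= k)%N.
Proof.
move=> Hk; rewrite /vnumber; case: excluded_middle_informative => [H|H].
- case: ex_minnP => m _ Hmin; apply: Hmin.
  by rewrite /vnum_pred; case: excluded_middle_informative.
- exfalso; apply: H; exists k.
  by rewrite /vnum_pred; case: excluded_middle_informative.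
Qed.

Lemma vnumber_ge J b : (exists k, vnum_set J k) ->
  (forall k, vnum_set J k -> (b <= k)%N) -> (b <= vnumber J)%N.
Proof.
move=> [k Hk] Hb; rewrite /vnumber; case: excluded_middle_informative => [H|H].
- case: ex_minnP => m Hm _; apply: Hb.
  by move: Hm; rewrite /vnum_pred; case: excluded_middle_informative.
- exfalso; apply: H; exists k.
  by rewrite /vnum_pred; case: excluded_middle_informative.
Qed.

End Aux3.

Theorem proposition4p5 (K : fieldType) (t : nat) (I : ideal_of K t) :
  monomial_ideal I -> m_primary I ->
  exists s0 : nat, forall s : nat, (s0 <= s)%N ->
    (vnumber I <= vnumber (pow_ideal I s.+1))%N.
Proof.
move=> _ [HI Hrad].
have HX : forall i : 'I_t, exists n, I ('X_i ^+ n).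
  by move=> i; apply/Hrad; apply: gen_ideal_sub; exists i.
have [N HN] := fin_all_exists HX.
have ID1 : forall f, I f -> Dn 1 f.
  move=> f Hf; apply: Z0_D1; apply/max_ideal_Z0; apply/Hrad; exists 1%N.
  by rewrite expr1.
have HI1 : ~ I 1 by move/ID1; apply: not_Dn1.
have [mI [HmI HiI]] := socle HI HI1 HN.
have vI := vnumber_le (socle_vnum HI HmI HiI).
exists (mdeg mI) => s Hs.
case: (posnP t) => [t0|tpos].
  apply: leq_trans vI _; rewrite mdegE big1 // => i _.
  by exfalso; have := ltn_ord i; rewrite {2}t0.
set i0 : 'I_t := Ordinal tpos.
set J := pow_ideal I s.+1.
have HJ : is_ideal J by apply: pow_ideal_is_ideal.
have JD : forall f, J f -> Dn s.+1 f by apply: pow_sub_D.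
have JN : forall i, J ('X_i ^+ (N i * s.+1)) by apply: pow_X.
have HJ1 : ~ J 1 by move/JD; apply: not_Dn1.
have [mJ [HmJ HiJ]] := socle HJ HJ1 JN.
apply: leq_trans vI _; apply: leq_trans Hs _.
apply: vnumber_ge; first by exists (mdeg mJ); apply: socle_vnum.
by move=> k Hk; have := vnum_lb i0 HJ JD JN Hk.
Qed.
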